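(* Let $\mathbb{C}$ be an abelian category. Then: (i) every object $X$ satisfies: if $\kappa:X\to A$ is the kernel of a split epimorphism which is also a normal epimorphism, then $\kappa$ is a split monomorphism; (ii) every object is proto-complete; (iii) an object is complete if and only if it is (regular) injective; (iv) an object is strong-complete if and only if it is a zero object. More generally, (i), (iii) (with ''regular injective'', i.e. injective with respect to regular monomorphisms) and (iv) hold whenever $\mathbb{C}$ is a category whose opposite $\mathbb{C}^{\mathrm{op}}$ is semi-abelian.
   Context: A normal monomorphism (epimorphism) is a kernel (cokernel) of some morphism; a protosplit monomorphism is a kernel of a split epimorphism. An object $X$ of a pointed category is proto-complete if every protosplit monomorphism with domain $X$ is a split monomorphism; complete if every normal monomorphism with domain $X$ is a split monomorphism; strong-complete if every protosplit monomorphism with domain $X$ is a split monomorphism with a unique retraction. A category is semi-abelian if it is pointed, Barr-exact, protomodular (split short five lemma holds) and has binary coproducts. *)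

(* Defs.v *)
Set Implicit Arguments.
Unset Strict Implicit.

Record Category : Type := {
  Ob :> Type;
  Hom : Ob -> Ob -> Type;
  idm : forall X : Ob, Hom X X;
  comp : forall X Y Z : Ob, Hom Y Z -> Hom X Y -> Hom X Z;
  comp_assoc : forall (W X Y Z : Ob) (h : Hom Y Z) (g : Hom X Y) (f : Hom W X),
      comp h (comp g f) = comp (comp h g) f;
  comp_id_l : forall (X Y : Ob) (f : Hom X Y), comp (idm Y) f = f;
  comp_id_r : forall (X Y : Ob) (f : Hom X Y), comp f (idm X) = f
}.

Arguments Hom {c} _ _.
Arguments idm {c} _.
Arguments comp {c X Y Z} _ _.

Notation "g ∘ f" := (comp g f) (at level 40, left associativity).

Definition op (C : Category) : Category :=
  {| Ob := Ob C;
     Hom := fun X Y => @Hom C Y X;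
     idm := fun X => @idm C X;
     comp := fun X Y Z (g : @Hom C Z Y) (f : @Hom C Y X) => f ∘ g;
     comp_assoc := fun W X Y Z h g f => eq_sym (@comp_assoc C _ _ _ _ f g h);
     comp_id_l := fun X Y f => @comp_id_r C _ _ f;
     comp_id_r := fun X Y f => @comp_id_l C _ _ f |}.

Definition is_mono {C : Category} {X Y : C} (m : Hom X Y) : Prop :=
  forall (T : C) (a b : Hom T X), m ∘ a = m ∘ b -> a = b.

Definition is_epi {C : Category} {X Y : C} (e : Hom X Y) : Prop :=
  forall (T : C) (a b : Hom Y T), a ∘ e = b ∘ e -> a = b.

Definition is_iso {C : Category} {X Y : C} (f : Hom X Y) : Prop :=
  exists g : Hom Y X, g ∘ f = idm X /\ f ∘ g = idm Y.

Definition is_retraction {C : Category} {X Y : C} (m : Hom X Y) (r : Hom Y X) : Prop :=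
  r ∘ m = idm X.

Definition is_split_mono {C : Category} {X Y : C} (m : Hom X Y) : Prop :=
  exists r : Hom Y X, is_retraction m r.

Definition is_split_epi {C : Category} {X Y : C} (p : Hom X Y) : Prop :=
  exists s : Hom Y X, p ∘ s = idm Y.

Definition is_initial {C : Category} (I : C) : Prop :=
  forall X : C, exists f : Hom I X, forall g : Hom I X, g = f.

Definition is_terminal {C : Category} (T : C) : Prop :=
  forall X : C, exists f : Hom X T, forall g : Hom X T, g = f.

Definition is_zero_object {C : Category} (Z : C) : Prop :=
  is_initial Z /\ is_terminal Z.

Definition pointed (C : Category) : Prop := exists Z : C, is_zero_object Z.

Definition is_zero_morphism {C : Category} {X Y : C} (f : Hom X Y) : Prop :=
  exists (Z : C) (a : Hom X Z) (b : Hom Z Y), is_zero_object Z /\ f = b ∘ a.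

Definition is_kernel {C : Category} {K X Y : C} (k : Hom K X) (f : Hom X Y) : Prop :=
  is_zero_morphism (f ∘ k) /\
  forall (T : C) (g : Hom T X), is_zero_morphism (f ∘ g) ->
    exists h : Hom T K, k ∘ h = g /\ forall h' : Hom T K, k ∘ h' = g -> h' = h.

Definition is_cokernel {C : Category} {X Y Q : C} (q : Hom Y Q) (f : Hom X Y) : Prop :=
  is_zero_morphism (q ∘ f) /\
  forall (T : C) (g : Hom Y T), is_zero_morphism (g ∘ f) ->
    exists h : Hom Q T, h ∘ q = g /\ forall h' : Hom Q T, h' ∘ q = g -> h' = h.

Definition is_normal_mono {C : Category} {X A : C} (m : Hom X A) : Prop :=
  exists (B : C) (f : Hom A B), is_kernel m f.

Definition is_normal_epi {C : Category} {A B : C} (e : Hom A B) : Prop :=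
  exists (X : C) (f : Hom X A), is_cokernel e f.

Definition is_protosplit_mono {C : Category} {X A : C} (m : Hom X A) : Prop :=
  exists (B : C) (p : Hom A B), is_split_epi p /\ is_kernel m p.

Definition proto_complete {C : Category} (X : C) : Prop :=
  forall (A : C) (k : Hom X A), is_protosplit_mono k -> is_split_mono k.

Definition complete {C : Category} (X : C) : Prop :=
  forall (A : C) (k : Hom X A), is_normal_mono k -> is_split_mono k.

Definition strong_complete {C : Category} (X : C) : Prop :=
  forall (A : C) (k : Hom X A), is_protosplit_mono k ->
    exists r : Hom A X, is_retraction k r /\
      forall r' : Hom A X, is_retraction k r' -> r' = r.

Definition is_equalizer {C : Category} {E X Y : C} (e : Hom E X) (f g : Hom X Y) : Prop :=
  f ∘ e = g ∘ e /\
  forall (T : C) (h : Hom T X), f ∘ h = g ∘ h ->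
    exists u : Hom T E, e ∘ u = h /\ forall u' : Hom T E, e ∘ u' = h -> u' = u.

Definition is_coequalizer {C : Category} {X Y Q : C} (q : Hom Y Q) (f g : Hom X Y) : Prop :=
  q ∘ f = q ∘ g /\
  forall (T : C) (h : Hom Y T), h ∘ f = h ∘ g ->
    exists u : Hom Q T, u ∘ q = h /\ forall u' : Hom Q T, u' ∘ q = h -> u' = u.

Definition is_regular_mono {C : Category} {X Y : C} (m : Hom X Y) : Prop :=
  exists (Z : C) (f g : Hom Y Z), is_equalizer m f g.

Definition is_regular_epi {C : Category} {X Y : C} (e : Hom X Y) : Prop :=
  exists (W : C) (f g : Hom W X), is_coequalizer e f g.

Definition injective {C : Category} (X : C) : Prop :=
  forall (A B : C) (m : Hom A B) (f : Hom A X), is_mono m ->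
    exists g : Hom B X, g ∘ m = f.

Definition regular_injective {C : Category} (X : C) : Prop :=
  forall (A B : C) (m : Hom A B) (f : Hom A X), is_regular_mono m ->
    exists g : Hom B X, g ∘ m = f.

Definition is_product {C : Category} {P X Y : C} (p1 : Hom P X) (p2 : Hom P Y) : Prop :=
  forall (T : C) (f : Hom T X) (g : Hom T Y),
    exists u : Hom T P, (p1 ∘ u = f /\ p2 ∘ u = g) /\
      forall u' : Hom T P, p1 ∘ u' = f /\ p2 ∘ u' = g -> u' = u.

Definition is_coproduct {C : Category} {X Y S : C} (i1 : Hom X S) (i2 : Hom Y S) : Prop :=
  forall (T : C) (f : Hom X T) (g : Hom Y T),
    exists u : Hom S T, (u ∘ i1 = f /\ u ∘ i2 = g) /\
      forall u' : Hom S T, u' ∘ i1 = f /\ u' ∘ i2 = g -> u' = u.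

Definition has_binary_products (C : Category) : Prop :=
  forall X Y : C, exists (P : C) (p1 : Hom P X) (p2 : Hom P Y), is_product p1 p2.

Definition has_binary_coproducts (C : Category) : Prop :=
  forall X Y : C, exists (S : C) (i1 : Hom X S) (i2 : Hom Y S), is_coproduct i1 i2.

Definition is_pullback {C : Category} {P X Y Z : C}
    (a : Hom P X) (b : Hom P Y) (f : Hom X Z) (g : Hom Y Z) : Prop :=
  f ∘ a = g ∘ b /\
  forall (T : C) (x : Hom T X) (y : Hom T Y), f ∘ x = g ∘ y ->
    exists u : Hom T P, (a ∘ u = x /\ b ∘ u = y) /\
      forall u' : Hom T P, a ∘ u' = x /\ b ∘ u' = y -> u' = u.

Definition has_pullbacks (C : Category) : Prop :=
  forall (X Y Z : C) (f : Hom X Z) (g : Hom Y Z),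
    exists (P : C) (a : Hom P X) (b : Hom P Y), is_pullback a b f g.

Definition has_terminal (C : Category) : Prop := exists T : C, is_terminal T.

Definition finitely_complete (C : Category) : Prop :=
  has_terminal C /\ has_pullbacks C.

Definition is_kernel_pair {C : Category} {R X Y : C} (d0 d1 : Hom R X) (f : Hom X Y) : Prop :=
  is_pullback d0 d1 f f.

Definition has_kernels (C : Category) : Prop :=
  forall (X Y : C) (f : Hom X Y), exists (K : C) (k : Hom K X), is_kernel k f.

Definition has_cokernels (C : Category) : Prop :=
  forall (X Y : C) (f : Hom X Y), exists (Q : C) (q : Hom Y Q), is_cokernel q f.

(* Abelian category (Freyd's definition): a category with a zero object,
   binary products and coproducts, kernels and cokernels, in which every
   monomorphism is normal and every epimorphism is normal. *)
Definition abelian (C : Category) : Prop :=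
  pointed C /\ has_binary_products C /\ has_binary_coproducts C /\
  has_kernels C /\ has_cokernels C /\
  (forall (X Y : C) (m : Hom X Y), is_mono m -> is_normal_mono m) /\
  (forall (X Y : C) (e : Hom X Y), is_epi e -> is_normal_epi e).

Definition regular (C : Category) : Prop :=
  finitely_complete C /\
  (forall (R X Y : C) (d0 d1 : Hom R X) (f : Hom X Y), is_kernel_pair d0 d1 f ->
     exists (Q : C) (q : Hom X Q), is_coequalizer q d0 d1) /\
  (forall (P X Y Z : C) (a : Hom P X) (b : Hom P Y) (f : Hom X Z) (g : Hom Y Z),
     is_pullback a b f g -> is_regular_epi f -> is_regular_epi b).

(* Internal equivalence relation on X: a jointly monic pair d0, d1 : R ⇉ X
   whose induced relation on generalized elements T -> X is, for every T,
   reflexive, symmetric and transitive. *)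
Definition rel_of {C : Category} {R X : C} (d0 d1 : Hom R X) (T : C)
    (x y : Hom T X) : Prop :=
  exists r : Hom T R, d0 ∘ r = x /\ d1 ∘ r = y.

Definition is_internal_equivalence {C : Category} {R X : C} (d0 d1 : Hom R X) : Prop :=
  (forall (T : C) (r r' : Hom T R), d0 ∘ r = d0 ∘ r' -> d1 ∘ r = d1 ∘ r' -> r = r') /\
  (forall (T : C) (x : Hom T X), rel_of d0 d1 x x) /\
  (forall (T : C) (x y : Hom T X), rel_of d0 d1 x y -> rel_of d0 d1 y x) /\
  (forall (T : C) (x y z : Hom T X),
     rel_of d0 d1 x y -> rel_of d0 d1 y z -> rel_of d0 d1 x z).

Definition barr_exact (C : Category) : Prop :=
  regular C /\
  forall (R X : C) (d0 d1 : Hom R X), is_internal_equivalence d0 d1 ->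
    exists (Y : C) (f : Hom X Y), is_kernel_pair d0 d1 f.

(* Protomodularity for a pointed finitely complete category: the split short
   five lemma. *)
Definition protomodular (C : Category) : Prop :=
  forall (K A B K' A' B' : C)
    (k : Hom K A) (p : Hom A B) (s : Hom B A)
    (k' : Hom K' A') (p' : Hom A' B') (s' : Hom B' A')
    (u : Hom K K') (v : Hom A A') (w : Hom B B'),
    is_kernel k p -> p ∘ s = idm B ->
    is_kernel k' p' -> p' ∘ s' = idm B' ->
    v ∘ k = k' ∘ u -> p' ∘ v = w ∘ p -> v ∘ s = s' ∘ w ->
    is_iso u -> is_iso w -> is_iso v.

Definition semi_abelian (C : Category) : Prop :=
  pointed C /\ barr_exact C /\ protomodular C /\ has_binary_coproducts C.

(* Main.v *)
Require Import Defs.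
Set Implicit Arguments.
Unset Strict Implicit.

Lemma assoc {C : Category} {W X Y Z : C} (h : Hom Y Z) (g : Hom X Y) (f : Hom W X) :
  h ∘ (g ∘ f) = (h ∘ g) ∘ f.
Proof. apply comp_assoc. Qed.
Lemma idl {C : Category} {X Y : C} (f : Hom X Y) : idm Y ∘ f = f.
Proof. apply comp_id_l. Qed.
Lemma idr {C : Category} {X Y : C} (f : Hom X Y) : f ∘ idm X = f.
Proof. apply comp_id_r. Qed.

Lemma zo_to {C : Category} {Z : C} (HZ : is_zero_object Z) {X : C} (a b : Hom X Z) : a = b.
Proof. destruct HZ as [_ HT]. destruct (HT X) as [f Hf]. rewrite (Hf a), (Hf b). reflexivity. Qed.
Lemma zo_from {C : Category} {Z : C} (HZ : is_zero_object Z) {X : C} (a b : Hom Z X) : a = b.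
Proof. destruct HZ as [HI _]. destruct (HI X) as [f Hf]. rewrite (Hf a), (Hf b). reflexivity. Qed.

Lemma zm_unique {C : Category} {X Y : C} (f g : Hom X Y) :
  is_zero_morphism f -> is_zero_morphism g -> f = g.
Proof.
  intros [Z [a [b [HZ ->]]]] [Z' [a' [b' [HZ' ->]]]].
  destruct (proj1 HZ Z') as [c _].
  rewrite (zo_to HZ' a' (c ∘ a)). rewrite (zo_from HZ b (b' ∘ c)). symmetry. apply assoc.
Qed.

Lemma zm_comp_l {C : Category} {X Y W : C} (g : Hom Y W) (f : Hom X Y) :
  is_zero_morphism f -> is_zero_morphism (g ∘ f).
Proof. intros [Z [a [b [HZ ->]]]]. exists Z, a, (g ∘ b). split; [exact HZ| apply assoc]. Qed.
Lemma zm_comp_r {C : Category} {X Y W : C} (f : Hom Y W) (g : Hom X Y) :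
  is_zero_morphism f -> is_zero_morphism (f ∘ g).
Proof. intros [Z [a [b [HZ ->]]]]. exists Z, (a ∘ g), b. split; [exact HZ| symmetry; apply assoc]. Qed.

Lemma zm_exists {C : Category} (HP : pointed C) (X Y : C) : exists f : Hom X Y, is_zero_morphism f.
Proof.
  destruct HP as [Z HZ]. destruct (proj2 HZ X) as [a _]. destruct (proj1 HZ Y) as [b _].
  exists (b ∘ a). exists Z, a, b. auto.
Qed.

Lemma zm_id_zero {C : Category} {X : C} : is_zero_morphism (idm X) -> is_zero_object X.
Proof.
  intros [Z [a [b [HZ Hid]]]]. split.
  - intros Y. destruct (proj1 HZ Y) as [h Hh]. exists (h ∘ a). intros g.
    rewrite <- (idr g), Hid, assoc. f_equal. apply Hh.
  - intros Y. destruct (proj2 HZ Y) as [h Hh]. exists (b ∘ h). intros g.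
    rewrite <- (idl g), Hid, <- assoc. f_equal. apply Hh.
Qed.

Lemma kernel_mono {C : Category} {K X Y : C} (k : Hom K X) (f : Hom X Y) : is_kernel k f -> is_mono k.
Proof.
  intros [H1 H2] T a b Hab.
  destruct (H2 T (k ∘ a)) as [h [_ Hu]].
  { rewrite assoc. apply zm_comp_r. exact H1. }
  rewrite (Hu a eq_refl), (Hu b (eq_sym Hab)). reflexivity.
Qed.

Lemma cokernel_epi {C : Category} {X Y Q : C} (q : Hom Y Q) (f : Hom X Y) : is_cokernel q f -> is_epi q.
Proof.
  intros [H1 H2] T a b Hab.
  destruct (H2 T (a ∘ q)) as [h [_ Hu]].
  { rewrite <- assoc. apply zm_comp_l. exact H1. }
  rewrite (Hu a eq_refl), (Hu b (eq_sym Hab)). reflexivity.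
Qed.

Lemma retr_mono {C : Category} {X Y : C} (m : Hom X Y) (r : Hom Y X) : r ∘ m = idm X -> is_mono m.
Proof. intros H T a b Hab. rewrite <- (idl a), <- (idl b), <- H, <- !assoc, Hab. reflexivity. Qed.

Lemma sect_epi {C : Category} {X Y : C} (p : Hom X Y) (s : Hom Y X) : p ∘ s = idm Y -> is_epi p.
Proof. intros H T a b Hab. rewrite <- (idr a), <- (idr b), <- H, !assoc, Hab. reflexivity. Qed.

Lemma mono_zm {C : Category} (HP : pointed C) {X Y T : C} (m : Hom X Y) (x : Hom T X) :
  is_mono m -> is_zero_morphism (m ∘ x) -> is_zero_morphism x.
Proof.
  intros Hm Hz. destruct (zm_exists HP T X) as [z Hz0].
  assert (x = z) as ->. { apply Hm. apply zm_unique; [exact Hz | apply zm_comp_l; exact Hz0]. }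
  exact Hz0.
Qed.

Lemma coker_of_ker {C : Category} {X A B K : C} (e : Hom A B) (f : Hom X A) (k : Hom K A) :
  is_cokernel e f -> is_kernel k e -> is_cokernel e k.
Proof.
  intros [Hf1 Hf2] [Hk1 Hk2]. split; [exact Hk1|].
  intros T g Hg. apply Hf2.
  destruct (Hk2 X f Hf1) as [h [Hh _]]. rewrite <- Hh, assoc. apply zm_comp_r. exact Hg.
Qed.

Lemma ker_of_coker {C : Category} {X A B Q : C} (m : Hom X A) (f : Hom A B) (q : Hom A Q) :
  is_kernel m f -> is_cokernel q m -> is_kernel m q.
Proof.
  intros [Hf1 Hf2] [Hq1 Hq2]. split; [exact Hq1|].
  intros T g Hg. apply Hf2.
  destruct (Hq2 B f Hf1) as [h [Hh _]]. rewrite <- Hh, <- assoc. apply zm_comp_l. exact Hg.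
Qed.

Lemma prod_pair {C : Category} {P X Y : C} {p1 : Hom P X} {p2 : Hom P Y} (H : is_product p1 p2)
  {T : C} (f : Hom T X) (g : Hom T Y) : exists u, p1 ∘ u = f /\ p2 ∘ u = g.
Proof. destruct (H T f g) as [u [Hu _]]. exists u. exact Hu. Qed.
Lemma prod_ext {C : Category} {P X Y : C} {p1 : Hom P X} {p2 : Hom P Y} (H : is_product p1 p2)
  {T : C} (u v : Hom T P) : p1 ∘ u = p1 ∘ v -> p2 ∘ u = p2 ∘ v -> u = v.
Proof.
  intros H1 H2. destruct (H T (p1 ∘ v) (p2 ∘ v)) as [w [_ Hw]].
  rewrite (Hw u (conj H1 H2)), (Hw v (conj eq_refl eq_refl)). reflexivity.
Qed.
Lemma coprod_pair {C : Category} {X Y S : C} {i1 : Hom X S} {i2 : Hom Y S} (H : is_coproduct i1 i2)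
  {T : C} (f : Hom X T) (g : Hom Y T) : exists u, u ∘ i1 = f /\ u ∘ i2 = g.
Proof. destruct (H T f g) as [u [Hu _]]. exists u. exact Hu. Qed.
Lemma coprod_ext {C : Category} {X Y S : C} {i1 : Hom X S} {i2 : Hom Y S} (H : is_coproduct i1 i2)
  {T : C} (u v : Hom S T) : u ∘ i1 = v ∘ i1 -> u ∘ i2 = v ∘ i2 -> u = v.
Proof.
  intros H1 H2. destruct (H T (v ∘ i1) (v ∘ i2)) as [w [_ Hw]].
  rewrite (Hw u (conj H1 H2)), (Hw v (conj eq_refl eq_refl)). reflexivity.
Qed.

Lemma coprod_coker {C : Category} {X Y S : C} {i1 : Hom X S} {i2 : Hom Y S} (H : is_coproduct i1 i2)
  (a : Hom S Y) : is_zero_morphism (a ∘ i1) -> a ∘ i2 = idm Y -> is_cokernel a i1.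
Proof.
  intros Ha1 Ha2. split; [exact Ha1|].
  intros T g Hg. exists (g ∘ i2). split.
  - apply (coprod_ext H).
    + rewrite <- assoc. apply zm_unique; [apply zm_comp_l, Ha1 | exact Hg].
    + rewrite <- assoc, Ha2, idr. reflexivity.
  - intros h' Hh'. rewrite <- Hh', <- assoc, Ha2, idr. reflexivity.
Qed.

Lemma zo_op {C : Category} (Z : C) : @is_zero_object (op C) Z <-> is_zero_object Z.
Proof. unfold is_zero_object, is_initial, is_terminal; cbn. tauto. Qed.

Lemma zm_op {C : Category} {X Y : C} (f : Hom Y X) :
  @is_zero_morphism (op C) X Y f <-> is_zero_morphism f.
Proof.
  split; intros [Z [a [b [HZ E]]]].
  - exists Z, b, a. split; [apply zo_op; exact HZ | exact E].
  - exists Z, b, a. split; [apply zo_op; exact HZ | exact E].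
Qed.

Lemma ker_op {C : Category} {K X Y : C} (k : Hom X K) (f : Hom Y X) :
  @is_kernel (op C) K X Y k f <-> is_cokernel k f.
Proof.
  split; intros [H1 H2]; split.
  - apply zm_op in H1. exact H1.
  - intros T g Hg. destruct (H2 T g) as [h [Hh Hu]]. { apply zm_op. exact Hg. }
    exists h. split; [exact Hh|]. intros h' Hh'. apply Hu. exact Hh'.
  - apply zm_op. exact H1.
  - intros T g Hg. destruct (H2 T g) as [h [Hh Hu]]. { apply zm_op in Hg. exact Hg. }
    exists h. split; [exact Hh|]. intros h' Hh'. apply Hu. exact Hh'.
Qed.

Lemma coker_op {C : Category} {X Y Q : C} (q : Hom Q Y) (f : Hom Y X) :
  @is_cokernel (op C) X Y Q q f <-> is_kernel q f.
Proof.
  split; intros [H1 H2]; split.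
  - apply zm_op in H1. exact H1.
  - intros T g Hg. destruct (H2 T g) as [h [Hh Hu]]. { apply zm_op. exact Hg. }
    exists h. split; [exact Hh|]. intros h' Hh'. apply Hu. exact Hh'.
  - apply zm_op. exact H1.
  - intros T g Hg. destruct (H2 T g) as [h [Hh Hu]]. { apply zm_op in Hg. exact Hg. }
    exists h. split; [exact Hh|]. intros h' Hh'. apply Hu. exact Hh'.
Qed.

Lemma abelian_op {C : Category} : abelian C -> abelian (op C).
Proof.
  intros [[Z HZ] [HPr [HCo [HK [HCK [HMn HEn]]]]]].
  split; [exists Z; apply zo_op; exact HZ|].
  split; [exact HCo|]. split; [exact HPr|].
  split. { intros X Y f. destruct (HCK Y X f) as [Q [q Hq]]. exists Q, q. apply ker_op. exact Hq. }
  split. { intros X Y f. destruct (HK Y X f) as [K [k Hk]]. exists K, k. apply coker_op. exact Hk. }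
  split.
  - intros X Y m Hm. destruct (HEn Y X m Hm) as [B [f Hf]]. exists B, f. apply ker_op. exact Hf.
  - intros X Y e He. destruct (HMn Y X e He) as [B [f Hf]]. exists B, f. apply coker_op. exact Hf.
Qed.
Unset Implicit Arguments.
Definition JE_prop (C : Category) : Prop :=
  forall (A B K : C) (p : Hom A B) (s : Hom B A) (k : Hom K A),
    p ∘ s = idm B -> is_kernel k p ->
    forall (T : C) (u v : Hom A T), u ∘ k = v ∘ k -> u ∘ s = v ∘ s -> u = v.

Definition KP_prop (C : Category) : Prop :=
  forall (X Y : C) (h : Hom X Y), exists (R : C) (d0 d1 : Hom R X) (dl : Hom X R),
    d0 ∘ dl = idm X /\ d1 ∘ dl = idm X /\ h ∘ d0 = h ∘ d1 /\
    forall (T : C) (x y : Hom T X), h ∘ x = h ∘ y -> exists w, d0 ∘ w = x /\ d1 ∘ w = y.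

Definition TKM_prop (C : Category) : Prop :=
  forall (X Y : C) (h : Hom X Y),
    (forall (T : C) (z : Hom T X), is_zero_morphism (h ∘ z) -> is_zero_morphism z) -> is_mono h.

Definition JSE_prop (C : Category) : Prop :=
  forall (A B K : C) (p : Hom A B) (s : Hom B A) (k : Hom K A),
    p ∘ s = idm B -> is_kernel k p ->
    forall (E : C) (e : Hom E A) (k1 : Hom K E) (s1 : Hom B E),
      is_mono e -> e ∘ k1 = k -> e ∘ s1 = s -> is_iso e.

Definition EQ_prop (C : Category) : Prop :=
  forall (A T : C) (u v : Hom A T), exists (E : C) (e : Hom E A),
    u ∘ e = v ∘ e /\ is_mono e /\
    forall (W : C) (h : Hom W A), u ∘ h = v ∘ h -> exists w, e ∘ w = h.

Lemma TKM_of {C : Category} (HP : pointed C) (HK : has_kernels C) (HJ : JE_prop C) (HKP : KP_prop C) :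
  TKM_prop C.
Proof.
  intros X Y h Htk T x y Hxy.
  destruct (HKP X Y h) as [R [d0 [d1 [dl [H0 [H1 [Hh Hf]]]]]]].
  destruct (HK R X d0) as [K [k0 Hk0]].
  assert (d0 = d1) as Hd.
  { apply (HJ R X K d0 dl k0 H0 Hk0 X d0 d1).
    - apply zm_unique. apply (proj1 Hk0). apply Htk.
      rewrite assoc, <- Hh, <- assoc. apply zm_comp_l, (proj1 Hk0).
    - rewrite H0, H1. reflexivity. }
  destruct (Hf T x y Hxy) as [w [Hw0 Hw1]]. rewrite <- Hw0, <- Hw1, Hd. reflexivity.
Qed.

Lemma regepi_normal {C : Category} (HP : pointed C) (HK : has_kernels C) (HJ : JE_prop C)
  (HKP : KP_prop C) (X Y : C) (e : Hom X Y) : is_regular_epi e -> is_normal_epi e.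
Proof.
  intros [W [f [g [Hfg Hco]]]].
  destruct (HK X Y e) as [K [k Hk]].
  exists K, k. split; [exact (proj1 Hk)|].
  intros T g' Hg'. apply Hco.
  destruct (HKP X Y e) as [R [d0 [d1 [dl [H0 [H1 [Hh Hf]]]]]]].
  destruct (HK R X d0) as [K0 [k0 Hk0]].
  assert (g' ∘ d0 = g' ∘ d1) as Hd.
  { apply (HJ R X K0 d0 dl k0 H0 Hk0 T).
    - apply zm_unique.
      + rewrite <- assoc. apply zm_comp_l, (proj1 Hk0).
      + destruct (proj2 Hk K0 (d1 ∘ k0)) as [t [Ht _]].
        { rewrite assoc, <- Hh, <- assoc. apply zm_comp_l, (proj1 Hk0). }
        rewrite <- assoc, <- Ht, assoc. apply zm_comp_r, Hg'.
    - rewrite <- !assoc, H0, H1. reflexivity. }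
  destruct (Hf W f g Hfg) as [w [Hw0 Hw1]].
  rewrite <- Hw0, <- Hw1, !assoc, Hd. reflexivity.
Qed.

Lemma strong_zero {C : Category} (HP : pointed C) (HPr : has_binary_products C) (HJ : JE_prop C) (X : C) :
  (forall (A : C) (k : Hom A X),
     (exists (B : C) (m : Hom B A), is_split_mono m /\ is_cokernel k m) ->
     exists s : Hom X A, k ∘ s = idm X /\ forall s', k ∘ s' = idm X -> s' = s) ->
  is_zero_object X.
Proof.
  intros Hs.
  destruct (HPr X X) as [P [p1 [p2 Hp]]].
  destruct (zm_exists HP X X) as [z Hz].
  destruct (prod_pair Hp (idm X) z) as [i1 [Hi11 Hi12]].
  destruct (prod_pair Hp z (idm X)) as [i2 [Hi21 Hi22]].
  destruct (prod_pair Hp (idm X) (idm X)) as [dg [Hd1 Hd2]].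
  assert (Hker : is_kernel i2 p1).
  { split. rewrite Hi21; exact Hz.
    intros T g Hg. exists (p2 ∘ g). split.
    - apply (prod_ext Hp).
      + rewrite assoc, Hi21. apply zm_unique; [apply zm_comp_r, Hz| exact Hg].
      + rewrite assoc, Hi22, idl. reflexivity.
    - intros h' Hh'. rewrite <- Hh', assoc, Hi22, idl. reflexivity. }
  assert (Hcok : is_cokernel p1 i2).
  { split. rewrite Hi21; exact Hz.
    intros T g Hg. exists (g ∘ i1). split.
    - apply (HJ P X X p1 i1 i2 Hi11 Hker T).
      + rewrite <- assoc, Hi21. apply zm_unique; [ apply zm_comp_l, Hz | exact Hg].
      + rewrite <- assoc, Hi11, idr. reflexivity.
    - intros h' Hh'. rewrite <- Hh', <- assoc, Hi11, idr. reflexivity. }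
  destruct (Hs P p1) as [s [_ Hu]].
  { exists X, i2. split. exists p2. exact Hi22. exact Hcok. }
  assert (i1 = dg) as E. { rewrite (Hu i1 Hi11), (Hu dg Hd1). reflexivity. }
  apply zm_id_zero. rewrite <- Hd2, <- E, Hi12. exact Hz.
Qed.

Lemma zero_strong {C : Category} (X : C) : is_zero_object X -> strong_complete X.
Proof.
  intros HZ A k _. destruct (proj2 HZ A) as [r Hr]. exists r. split.
  - unfold is_retraction. apply (zo_to HZ).
  - intros r' _. apply Hr.
Qed.

Lemma ab_eqz {C : Category} (HA : abelian C) {A T : C} (u v : Hom A T) :
  exists (Y : C) (g : Hom A Y), forall (W : C) (h : Hom W A),
    u ∘ h = v ∘ h <-> is_zero_morphism (g ∘ h).
Proof.
  destruct HA as [HP [HPr [HCo [HK [HCK [HMn HEn]]]]]].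
  destruct (HPr T T) as [P [p1 [p2 Hp]]].
  destruct (prod_pair Hp (idm T) (idm T)) as [dg [Hd1 Hd2]].
  destruct (HMn T P dg (retr_mono Hd1)) as [Y [f Hf]].
  destruct (prod_pair Hp u v) as [uv [Huv1 Huv2]].
  exists Y, (f ∘ uv). intros W h. split.
  - intros E. assert (uv ∘ h = dg ∘ (u ∘ h)) as E2.
    { apply (prod_ext Hp).
      - rewrite !assoc, Huv1, Hd1, idl. reflexivity.
      - rewrite !assoc, Huv2, Hd2, idl. exact (eq_sym E). }
    rewrite <- assoc, E2, assoc. apply zm_comp_r, (proj1 Hf).
  - intros Z. destruct (proj2 Hf W (uv ∘ h)) as [t [Ht _]].
    { rewrite assoc. exact Z. }
    rewrite <- Huv1, <- Huv2, <- !assoc, <- Ht, !assoc, Hd1, Hd2. reflexivity.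
Qed.

Lemma ab_JE {C : Category} (HA : abelian C) : JE_prop C.
Proof.
  intros A B K p s k Hps Hk T u v Huk Hus.
  destruct (ab_eqz HA u v) as [Y [g Hg]].
  pose proof HA as [HP [_ [_ [_ [_ [_ HEn]]]]]].
  destruct (HEn A B p (sect_epi Hps)) as [X0 [f0 Hf0]].
  pose proof (coker_of_ker Hf0 Hk) as Hpk.
  destruct (proj2 Hpk Y g) as [g' [Hg' _]].
  { apply (proj1 (Hg K k)). exact Huk. }
  assert (Hz' : is_zero_morphism g').
  { rewrite <- (idr g'), <- Hps, assoc, Hg'. apply (proj1 (Hg B s)). exact Hus. }
  rewrite <- (idr u), <- (idr v). apply (proj2 (Hg A (idm A))).
  rewrite idr, <- Hg'. apply zm_comp_r. exact Hz'.
Qed.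

Lemma ab_KP {C : Category} (HA : abelian C) : KP_prop C.
Proof.
  intros X Y h. pose proof HA as [HP [HPr [HCo [HK _]]]].
  destruct (HPr X X) as [P [p1 [p2 Hp]]].
  destruct (ab_eqz HA (h ∘ p1) (h ∘ p2)) as [W [g Hg]].
  destruct (HK P W g) as [R [e He]].
  destruct (prod_pair Hp (idm X) (idm X)) as [dg [Hd1 Hd2]].
  destruct (proj2 He X dg) as [dl [Hdl _]].
  { apply (proj1 (Hg X dg)). rewrite <- !assoc, Hd1, Hd2. reflexivity. }
  exists R, (p1 ∘ e), (p2 ∘ e), dl. split; [|split; [|split]].
  - rewrite <- assoc, Hdl, Hd1. reflexivity.
  - rewrite <- assoc, Hdl, Hd2. reflexivity.
  - rewrite !assoc. apply (proj2 (Hg R e)). exact (proj1 He).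
  - intros T x y Hxy. destruct (prod_pair Hp x y) as [xy [Hx Hy]].
    destruct (proj2 He T xy) as [w [Hw _]].
    { apply (proj1 (Hg T xy)). rewrite <- !assoc, Hx, Hy. exact Hxy. }
    exists w. rewrite <- !assoc, Hw, Hx, Hy. split; reflexivity.
Qed.

Lemma ab_TKM {C : Category} (HA : abelian C) : TKM_prop C.
Proof.
  pose proof HA as [HP [_ [_ [HK _]]]]. exact (TKM_of HP HK (ab_JE HA) (ab_KP HA)).
Qed.

Lemma ab_monoepi_iso {C : Category} (HA : abelian C) {X Y : C} (f : Hom X Y) :
  is_mono f -> is_epi f -> is_iso f.
Proof.
  intros Hm He. pose proof HA as [HP [_ [_ [_ [_ [HMn _]]]]]].
  destruct (HMn X Y f Hm) as [B [g Hg]].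
  assert (Hz : is_zero_morphism g).
  { destruct (zm_exists HP Y B) as [z Hz].
    assert (g = z) as ->. { apply He. apply zm_unique; [exact (proj1 Hg) | apply zm_comp_r, Hz]. }
    exact Hz. }
  destruct (proj2 Hg Y (idm Y)) as [t [Ht _]].
  { apply zm_comp_r, Hz. }
  exists t. split; [|exact Ht].
  apply Hm. rewrite assoc, Ht, idl, idr. reflexivity.
Qed.

Lemma ab_Li {C : Category} (HA : abelian C) {B A X : C} (m : Hom B A) (q : Hom A X) :
  is_split_mono m -> is_cokernel q m -> is_split_epi q.
Proof.
  intros [r Hr] Hq. pose proof HA as [HP [_ [_ [HK [_ [HMn _]]]]]].
  unfold is_retraction in Hr.
  destruct (HK A B r) as [K [k Hk]].
  assert (Hm : is_mono m) by exact (retr_mono Hr).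
  destruct (HMn B A m Hm) as [Y [f Hf]].
  pose proof (ker_of_coker Hf Hq) as Hmq.
  assert (Hiso : is_iso (q ∘ k)).
  { apply (ab_monoepi_iso HA).
    - apply (ab_TKM HA). intros T z Hz.
      destruct (proj2 Hmq T (k ∘ z)) as [w [Hw _]]. { rewrite assoc. exact Hz. }
      assert (Hw0 : is_zero_morphism w).
      { rewrite <- (idl w), <- Hr, <- assoc, Hw, assoc. apply zm_comp_r, (proj1 Hk). }
      apply (mono_zm HP (kernel_mono Hk)). rewrite <- Hw. apply zm_comp_l, Hw0.
    - intros T a b Hab. apply (cokernel_epi Hq).
      apply (ab_JE HA A B K r m k Hr Hk T).
      + rewrite <- !assoc. exact Hab.
      + apply zm_unique; rewrite <- assoc; apply zm_comp_l, (proj1 Hq). }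
  destruct Hiso as [i [Hi1 Hi2]]. exists (k ∘ i). rewrite assoc. exact Hi2.
Qed.
Lemma pb_prod {C : Category} (HP : pointed C) (HPb : has_pullbacks C) : has_binary_products C.
Proof.
  intros X Y. destruct HP as [Z HZ].
  destruct (proj2 HZ X) as [tx _]. destruct (proj2 HZ Y) as [ty _].
  destruct (HPb X Y Z tx ty) as [P [a [b [_ Hpb]]]].
  exists P, a, b. intros T f g.
  exact (Hpb T f g (zo_to HZ _ _)).
Qed.

Lemma pb_ker {C : Category} (HP : pointed C) (HPb : has_pullbacks C) : has_kernels C.
Proof.
  intros X Y f. destruct HP as [Z HZ]. destruct (proj1 HZ Y) as [z _].
  destruct (HPb X Z Y f z) as [P [a [b [Hc Hpb]]]].
  exists P, a. split.
  - rewrite Hc. exists Z, b, z. split; [exact HZ | reflexivity].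
  - intros T g Hg. destruct (proj2 HZ T) as [t _].
    destruct (Hpb T g t) as [u [[Hu1 Hu2] Hu]].
    { apply zm_unique; [exact Hg | exists Z, t, z; split; [exact HZ| reflexivity]]. }
    exists u. split; [exact Hu1|]. intros h' Hh'. apply Hu. split; [exact Hh' | apply (zo_to HZ)].
Qed.

Lemma pb_EQ {C : Category} (HP : pointed C) (HPb : has_pullbacks C) : EQ_prop C.
Proof.
  intros A T u v.
  destruct (pb_prod HP HPb T T) as [P [p1 [p2 Hp]]].
  destruct (prod_pair Hp (idm T) (idm T)) as [dg [Hd1 Hd2]].
  destruct (prod_pair Hp u v) as [uv [Huv1 Huv2]].
  destruct (HPb A T P uv dg) as [E [e [t [Hc Hpb]]]].
  assert (Hu : u ∘ e = t). { rewrite <- Huv1, <- assoc, Hc, assoc, Hd1, idl. reflexivity. }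
  assert (Hv : v ∘ e = t). { rewrite <- Huv2, <- assoc, Hc, assoc, Hd2, idl. reflexivity. }
  exists E, e. split; [congruence|split].
  - intros W a b Hab. destruct (Hpb W (e ∘ b) (t ∘ b)) as [w [_ Hw]].
    { rewrite !assoc, Hc. reflexivity. }
    assert (a = w) as ->. { apply Hw. split; [exact Hab|]. rewrite <- Hu, <- !assoc, Hab. reflexivity. }
    symmetry. apply Hw. split; reflexivity.
  - intros W h Hh. destruct (Hpb W h (u ∘ h)) as [w [[Hw _] _]].
    { apply (prod_ext Hp); rewrite !assoc.
      - rewrite Huv1, Hd1, idl. reflexivity.
      - rewrite Huv2, Hd2, idl. exact (eq_sym Hh). }
    exists w. exact Hw.
Qed.

Lemma pm_JSE {C : Category} (Hpm : protomodular C) : JSE_prop C.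
Proof.
  intros A B K p s k Hps Hk E e k1 s1 He Hek Hes.
  assert (Hk1 : is_kernel k1 (p ∘ e)).
  { split.
    - rewrite <- assoc, Hek. exact (proj1 Hk).
    - intros T g Hg. destruct (proj2 Hk T (e ∘ g)) as [h [Hh Hu]].
      { rewrite assoc. exact Hg. }
      exists h. split.
      + apply He. rewrite assoc, Hek. exact Hh.
      + intros h' Hh'. apply Hu. rewrite <- Hh', assoc, Hek. reflexivity. }
  apply (Hpm K E B K A B k1 (p ∘ e) s1 k p s (idm K) e (idm B) Hk1).
  - rewrite <- assoc, Hes. exact Hps.
  - exact Hk.
  - exact Hps.
  - rewrite idr. exact Hek.
  - rewrite idl. reflexivity.
  - rewrite idr. exact Hes.
  - exists (idm K). split; apply idl.
  - exists (idm B). split; apply idl.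
Qed.

Lemma JE_of_JSE {C : Category} (HJ : JSE_prop C) (HE : EQ_prop C) : JE_prop C.
Proof.
  intros A B K p s k Hps Hk T u v Huk Hus.
  destruct (HE A T u v) as [E [e [Hue [Hem Hf]]]].
  destruct (Hf K k Huk) as [k1 Hk1]. destruct (Hf B s Hus) as [s1 Hs1].
  destruct (HJ A B K p s k Hps Hk E e k1 s1 Hem Hk1 Hs1) as [i [_ Hi]].
  rewrite <- (idr u), <- (idr v), <- Hi, !assoc, Hue. reflexivity.
Qed.

Lemma pb_KP {C : Category} (HPb : has_pullbacks C) : KP_prop C.
Proof.
  intros X Y h. destruct (HPb X X Y h h) as [R [d0 [d1 [Hc Hpb]]]].
  destruct (Hpb X (idm X) (idm X) eq_refl) as [dl [[H0 H1] _]].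
  exists R, d0, d1, dl. split; [exact H0|split; [exact H1|split; [exact Hc|]]].
  intros T x y Hxy. destruct (Hpb T x y Hxy) as [w [[Hw0 Hw1] _]]. exists w. split; assumption.
Qed.

Lemma sa_Li {C : Category} (HP : pointed C) (HPb : has_pullbacks C) (HJ : JSE_prop C)
  (HT : TKM_prop C) (HK : has_kernels C)
  {B A X : C} (m : Hom B A) (q : Hom A X) :
  is_split_mono m -> is_normal_mono m -> is_cokernel q m -> is_split_epi q.
Proof.
  intros [r Hr] [Y [f Hf]] Hq. unfold is_retraction in Hr.
  destruct (HK A B r) as [K [k Hk]].
  pose proof (ker_of_coker Hf Hq) as Hmq.
  assert (Hphi : is_mono (q ∘ k)).
  { apply HT. intros T z Hz.
    destruct (proj2 Hmq T (k ∘ z)) as [w [Hw _]]. { rewrite assoc. exact Hz. }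
    assert (Hw0 : is_zero_morphism w).
    { rewrite <- (idl w), <- Hr, <- assoc, Hw, assoc. apply zm_comp_r, (proj1 Hk). }
    apply (mono_zm HP (kernel_mono Hk)). rewrite <- Hw. apply zm_comp_l, Hw0. }
  destruct (HPb A K X q (q ∘ k)) as [P [p1 [p2 [Hc Hpb]]]].
  assert (Hp1 : is_mono p1).
  { intros T a b Hab. destruct (Hpb T (p1 ∘ b) (p2 ∘ b)) as [w [_ Hw]].
    { rewrite !assoc, Hc. reflexivity. }
    assert (a = w) as ->.
    { apply Hw. split; [exact Hab|]. apply Hphi.
      rewrite !assoc, <- Hc, <- !assoc, Hab. reflexivity. }
    symmetry. apply Hw. split; reflexivity. }
  destruct (Hpb K k (idm K)) as [k1 [[Hk1 _] _]]. { rewrite idr. reflexivity. }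
  destruct (zm_exists HP B K) as [zb Hzb].
  destruct (Hpb B m zb) as [s1 [[Hs1 _] _]].
  { apply zm_unique; [exact (proj1 Hq) | apply zm_comp_l, Hzb]. }
  destruct (HJ A B K r m k Hr Hk P p1 k1 s1 Hp1 Hk1 Hs1) as [i [Hi1 Hi2]].
  assert (Hg : (q ∘ k) ∘ (p2 ∘ i) = q).
  { rewrite assoc, <- Hc, <- assoc, Hi2, idr. reflexivity. }
  destruct (proj2 Hq K (p2 ∘ i)) as [h [Hh _]].
  { apply (mono_zm HP Hphi). rewrite assoc, Hg. exact (proj1 Hq). }
  assert (E : ((q ∘ k) ∘ h) ∘ q = idm X ∘ q). { rewrite <- assoc, Hh, Hg, idl. reflexivity. }
  assert (E2 : (q ∘ k) ∘ h = idm X) by (apply (cokernel_epi Hq); exact E).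
  exists (k ∘ h). rewrite assoc. exact E2.
Qed.

Lemma sa_iii {C : Category} (HP : pointed C) (HPb : has_pullbacks C)
  (Hstab : forall (P X Y Z : C) (a : Hom P X) (b : Hom P Y) (f : Hom X Z) (g : Hom Y Z),
     is_pullback a b f g -> is_regular_epi f -> is_regular_epi b)
  (HRN : forall (X Y : C) (e : Hom X Y), is_regular_epi e -> is_normal_epi e) (X : C) :
  (forall (A : C) (k : Hom A X), is_normal_epi k -> is_split_epi k) <->
  (forall (A B : C) (m : Hom B A) (f : Hom X A), is_regular_epi m -> exists g : Hom X B, m ∘ g = f).
Proof.
  split.
  - intros Hc A B m f Hm. destruct (HPb B X A m f) as [P [a [b [Hab Hpb]]]].
    destruct (Hc P b (HRN _ _ b (Hstab P B X A a b m f (conj Hab Hpb) Hm))) as [t Ht].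
    exists (a ∘ t). rewrite assoc, Hab, <- assoc, Ht, idr. reflexivity.
  - intros Hr A k [Y [f Hk]].
    destruct (zm_exists HP Y A) as [z Hz].
    destruct (Hr X A k (idm X)) as [g Hg].
    { exists Y, f, z. split.
      - apply zm_unique; [exact (proj1 Hk)| apply zm_comp_l, Hz].
      - intros T h Hh. apply (proj2 Hk). rewrite Hh. apply zm_comp_l, Hz. }
    exists g. exact Hg.
Qed.

Lemma ab_JM {C : Category} (HA : abelian C) {A B K T : C} (p : Hom B A) (s : Hom A B) (k : Hom A K)
  (u v : Hom T A) :
  s ∘ p = idm B -> is_cokernel k p -> k ∘ u = k ∘ v -> s ∘ u = s ∘ v -> u = v.
Proof.
  intros H1 H2 H3 H4.
  exact (ab_JE (abelian_op HA) A B K p s k H1 (proj2 (ker_op k p) H2) T u v H3 H4).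
Qed.

Lemma inj_complete {C : Category} (X : C) : injective X -> complete X.
Proof.
  intros Hi A k [B [f Hk]]. destruct (Hi X A k (idm X) (kernel_mono Hk)) as [g Hg].
  exists g. exact Hg.
Qed.
Lemma ab_complete_inj {C : Category} (HA : abelian C) (X : C) : complete X -> injective X.
Proof.
  intros Hc A B m f Hm.
  pose proof HA as [HP [HPr [HCo [HK [HCK [HMn HEn]]]]]].
  destruct (HCo A A) as [AA [j1 [j2 Hj]]].
  destruct (coprod_pair Hj (idm A) (idm A)) as [nab [Hn1 Hn2]].
  destruct (zm_exists HP A A) as [zA HzA].
  destruct (coprod_pair Hj zA (idm A)) as [al [Ha1 Ha2]].
  assert (Hal : is_cokernel al j1).
  { apply (coprod_coker Hj); [rewrite Ha1; exact HzA | exact Ha2]. }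
  destruct (HCo X B) as [XB [i1 [i2 Hi]]].
  destruct (coprod_pair Hj (i1 ∘ f) (i2 ∘ m)) as [F [HF1 HF2]].
  destruct (zm_exists HP X B) as [zXB HzXB].
  destruct (coprod_pair Hi zXB (idm B)) as [be [Hb1 Hb2]].
  destruct (zm_exists HP B X) as [zBX HzBX].
  destruct (coprod_pair Hi (idm X) zBX) as [rho [Hr1 Hr2]].
  assert (HbF : be ∘ F = m ∘ al).
  { apply (coprod_ext Hj).
    - rewrite <- !assoc, HF1, Ha1, assoc, Hb1.
      apply zm_unique; [apply zm_comp_r, HzXB | apply zm_comp_l, HzA].
    - rewrite <- !assoc, HF2, Ha2, assoc, Hb2, idl, idr. reflexivity. }
  destruct (HK AA A nab) as [K [k Hk]].
  assert (Hjm : forall T (x y : Hom T AA), nab ∘ x = nab ∘ y -> al ∘ x = al ∘ y -> x = y).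
  { intros T x y H1 H2. exact (ab_JM HA j1 nab al x y Hn1 Hal H2 H1). }
  assert (Hphi_m : is_mono (F ∘ k)).
  { intros T w1 w2 Hw.
    assert (Hw' : F ∘ (k ∘ w1) = F ∘ (k ∘ w2)) by (rewrite !assoc; exact Hw).
    apply (kernel_mono Hk). apply Hjm.
    - apply zm_unique; rewrite assoc; apply zm_comp_r, (proj1 Hk).
    - apply Hm. rewrite !assoc, <- HbF, <- !assoc, Hw'. reflexivity. }
  destruct (HCK K XB (F ∘ k)) as [P [c Hcq]].
  destruct (HMn K XB (F ∘ k) Hphi_m) as [Y0 [g0 Hg0]].
  pose proof (ker_of_coker Hg0 Hcq) as Hphik.
  assert (HJm : is_mono (c ∘ i1)).
  { apply (ab_TKM HA). intros T z Hz.
    destruct (proj2 Hphik T (i1 ∘ z)) as [w [Hw _]]. { rewrite assoc; exact Hz. }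
    assert (Hkw : is_zero_morphism (k ∘ w)).
    { destruct (zm_exists HP T AA) as [z0 Hz0].
      assert (k ∘ w = z0) as ->; [|exact Hz0].
      apply Hjm.
      - apply zm_unique; [rewrite assoc; apply zm_comp_r, (proj1 Hk) | apply zm_comp_l, Hz0].
      - apply zm_unique; [|apply zm_comp_l, Hz0].
        apply (mono_zm HP Hm). rewrite assoc, <- HbF, <- assoc, (assoc F k w), Hw, assoc, Hb1.
        apply zm_comp_r, HzXB. }
    rewrite <- (idl z), <- Hr1, <- assoc, <- Hw, <- assoc. apply zm_comp_l, zm_comp_l, Hkw. }
  destruct (Hc P (c ∘ i1) (HMn X P (c ∘ i1) HJm)) as [r Hr].
  destruct (HEn AA A nab (sect_epi Hn1)) as [X1 [f1 Hf1]].
  destruct (coker_of_ker Hf1 Hk) as [_ Hnk].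
  destruct (Hnk P (c ∘ F)) as [t [Ht _]]. { rewrite <- assoc. exact (proj1 Hcq). }
  assert (E : c ∘ (i2 ∘ m) = c ∘ (i1 ∘ f)).
  { rewrite <- HF1, <- HF2, !assoc, <- Ht, <- !assoc, Hn1, Hn2. reflexivity. }
  unfold is_retraction in Hr.
  exists (r ∘ (c ∘ i2)).
  rewrite <- !assoc, E, (assoc c i1 f), (assoc r (c ∘ i1) f), Hr, idl. reflexivity.
Qed.

Theorem proposition4p8 :
  (forall C : Category, abelian C ->
     (forall (X A B : C) (k : Hom X A) (p : Hom A B),
        is_split_epi p -> is_normal_epi p -> is_kernel k p -> is_split_mono k) /\
     (forall X : C, proto_complete X) /\
     (forall X : C, complete X <-> injective X) /\
     (forall X : C, strong_complete X <-> is_zero_object X)) /\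
  (forall C : Category, semi_abelian (op C) ->
     (forall (X A B : C) (k : Hom X A) (p : Hom A B),
        is_split_epi p -> is_normal_epi p -> is_kernel k p -> is_split_mono k) /\
     (forall X : C, complete X <-> regular_injective X) /\
     (forall X : C, strong_complete X <-> is_zero_object X)).
Proof.
  split.
  - intros C HA. pose proof (abelian_op HA) as HAD.
    pose proof HAD as [HPD [HPrD _]].
    split; [|split; [|split]].
    + intros X A B k p Hp _ Hk. exact (ab_Li HAD p k Hp (proj2 (coker_op (C:=C) k p) Hk)).
    + intros X A k [B [p [Hp Hk]]]. exact (ab_Li HAD p k Hp (proj2 (coker_op (C:=C) k p) Hk)).
    + intros X. split; [apply (ab_complete_inj HA) | apply inj_complete].
    + intros X. split; [|apply zero_strong].
      intros Hs. apply zo_op. apply (strong_zero HPD HPrD (ab_JE HAD) X).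
      intros A k [B [m [Hm Hc]]].
      destruct (Hs A k) as [r [Hr Hu]].
      { exists B, m. split; [exact Hm | apply (proj1 (coker_op (C:=C) k m)); exact Hc]. }
      exists r. split; [exact Hr|]. intros s' Hs'. apply Hu. exact Hs'.
  - intros C HS.
    destruct HS as [HP [[[[HT HPb] [Hcoeq Hstab]] Heff] [Hpm HCo]]].
    pose proof (pb_ker HP HPb) as HK.
    pose proof (pb_prod HP HPb) as HPr.
    pose proof (pm_JSE Hpm) as HJSE.
    pose proof (JE_of_JSE HJSE (pb_EQ HP HPb)) as HJE.
    pose proof (pb_KP HPb) as HKP.
    pose proof (TKM_of HP HK HJE HKP) as HTKM.
    pose proof (regepi_normal HP HK HJE HKP) as HRN.
    split; [|split].
    + intros X A B k p Hp [X' [f Hf]] Hk.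
      apply (sa_Li HP HPb HJSE HTKM HK p k Hp).
      * exists X', f. apply (proj2 (ker_op (C:=C) p f)). exact Hf.
      * exact (proj2 (coker_op (C:=C) k p) Hk).
    + intros X. pose proof (sa_iii HP HPb Hstab HRN X) as Hiff.
      split.
      * intros Hc.
        assert (L : forall (A : op C) (k : @Hom (op C) A X), is_normal_epi k -> is_split_epi k).
        { intros A k [Y [f Hk]]. apply Hc. exists Y, f.
          apply (proj1 (coker_op (C:=C) k f)). exact Hk. }
        exact (proj1 Hiff L).
      * intros Hr. pose proof (proj2 Hiff Hr) as L. intros A k [Y [f Hk]]. apply L. exists Y, f.
        apply (proj2 (coker_op (C:=C) k f)). exact Hk.
    + intros X. split; [|apply zero_strong].
      intros Hs. apply zo_op. apply (strong_zero HP HPr HJE X).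
      intros A k [B [m [Hm Hc]]].
      destruct (Hs A k) as [r [Hr Hu]].
      { exists B, m. split; [exact Hm | apply (proj1 (coker_op (C:=C) k m)); exact Hc]. }
      exists r. split; [exact Hr|]. intros s' Hs'. apply Hu. exact Hs'.
Qed.
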